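(* Let $k\ge1$, $\beta\ge1$ integers, $0\le\ell\le k-1$, and consider weighted $k$-server on a uniform metric space $S$ with server weights $1,\beta,\ldots,\beta^{k-1}$. Define $c_0=0$ and $c_\ell=\beta^{\ell-1}+\beta\cdot(\lceil n_{\ell-1}/2\rceil+1)\cdot c_{\ell-1}$ for $\ell>0$. Let $P\subseteq S$ with $|P|=n_\ell$, and suppose a server configuration is given in which at least one server other than the $\ell$ lightest servers (those of weights $1,\ldots,\beta^{\ell-1}$) occupies a point of $P$. Then for every request sequence that can be generated by a call $\mathsf{strategy}(\ell,P)$, there is a way to serve it starting from this configuration with total cost at most $c_\ell$.
   Context: The sequence $n_0,n_1,\ldots$ is defined by $n_0=1$ and $n_i=\left(\lceil n_{i-1}/2\rceil+1\right)\left(\lfloor n_{i-1}/2\rfloor+1\right)$ for $i>0$. Weighted $k$-server on a uniform metric: $k$ servers with given weights sit at points; each requested point must be occupied by a server after serving it; moving a server of weight $w$ to a different point costs $w$. For every $\ell\ge1$ and every set $P$ with $|P|=n_\ell$, fix a set system $\mathcal{Q}(\ell,P)\subseteq 2^P$ consisting of $\lceil n_{\ell-1}/2\rceil+1$ sets each of size $n_{\ell-1}$, such that every $p\in P$ is missed by some set of $\mathcal{Q}(\ell,P)$, and for every $p\in P$ there is $q\in P$ with every set of $\mathcal{Q}(\ell,P)$ containing $p$ or $q$ (such systems exist). The procedure $\mathsf{strategy}(\ell,P)$ (with $|P|=n_\ell$) is: if $\ell=0$, request the unique point of $P$; if $\ell>0$, repeat $\beta\cdot(\lceil n_{\ell-1}/2\rceil+1)$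 times: pick $P'$ uniformly at random from $\mathcal{Q}(\ell,P)$, independently of all previous random choices, and run $\mathsf{strategy}(\ell-1,P')$. *)

(* Defs.v *)
From mathcomp Require Import all_boot all_order.
From mathcomp Require Import finmap.
Set Implicit Arguments. Unset Strict Implicit. Unset Printing Implicit Defensive.

Fixpoint nseqv (i : nat) : nat :=
  match i with
  | 0 => 1
  | i'.+1 => (uphalf (nseqv i') + 1) * ((nseqv i')./2 + 1)
  end.

Fixpoint cbound (beta l : nat) : nat :=
  match l with
  | 0 => 0
  | l'.+1 => beta ^ l' + beta * (uphalf (nseqv l') + 1) * cbound beta l'
  end.

Definition valid_Q (S : choiceType) (Q : nat -> {fset S} -> seq {fset S}) : Prop :=
  forall (l : nat) (P : {fset S}), 1 <= l -> (#|` P|)%fset = nseqv l ->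
    [/\ uniq (Q l P),
        size (Q l P) = uphalf (nseqv l.-1) + 1,
        (forall A, A \in Q l P -> (A `<=` P)%fset /\ (#|` A|)%fset = nseqv l.-1),
        (forall p, p \in P -> exists2 A, A \in Q l P & p \notin A) &
        (forall p, p \in P -> exists2 q, q \in P &
            forall A, A \in Q l P -> (p \in A) || (q \in A))].

(* can_gen Q beta l P sigma : sigma is a request sequence that can be generated
   (with positive probability) by a call strategy(l,P). *)
Fixpoint can_gen (S : choiceType) (Q : nat -> {fset S} -> seq {fset S})
    (beta l : nat) (P : {fset S}) (sigma : seq S) : Prop :=
  match l with
  | 0 => exists p, P = [fset p]%fset /\ sigma = [:: p]
  | l'.+1 =>
      exists L : seq ({fset S} * seq S),
        [/\ size L = beta * (uphalf (nseqv l') + 1),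
            (forall x, x \in L -> x.1 \in Q l P /\ can_gen Q beta l' x.1 x.2) &
            sigma = flatten (map snd L)]
  end.

(* Configurations: server i : 'I_k sits at conf i and has weight beta^i. *)
Definition move_cost (S : eqType) (k beta : nat) (c c' : 'I_k -> S) : nat :=
  \sum_(i < k) (if c i == c' i then 0 else beta ^ i).

(* confs = the configurations after serving each request; request r is served
   by configuration c iff some server is at r in c. *)
Fixpoint serves (S : eqType) (k : nat) (sigma : seq S) (confs : seq ('I_k -> S)) : Prop :=
  match sigma, confs with
  | [::], [::] => True
  | r :: sigma', c :: confs' => (exists i, c i = r) /\ serves sigma' confs'
  | _, _ => False
  end.

Fixpoint total_cost (S : eqType) (k beta : nat) (c0 : 'I_k -> S) (confs : seq ('I_k -> S)) : nat :=
  match confs with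
  | [::] => 0
  | c :: cs => move_cost beta c0 c + total_cost beta c cs
  end.

(* Main.v *)
Require Import Defs.
From mathcomp Require Import all_boot all_order.
From mathcomp Require Import finmap.
From mathcomp Require Import zify.

Set Implicit Arguments. Unset Strict Implicit. Unset Printing Implicit Defensive.
Local Open Scope nat_scope.

Fixpoint allP (T : Type) (Pr : T -> Prop) (s : seq T) : Prop :=
  match s with [::] => True | x :: s' => Pr x /\ allP Pr s' end.

Lemma allP_cat (T : Type) (Pr : T -> Prop) s1 s2 :
  allP Pr s1 -> allP Pr s2 -> allP Pr (s1 ++ s2).
Proof. by elim: s1 => //= x s IH [H1 H2] H3; split => //; apply: IH. Qed.

Lemma allP_last (T : Type) (Pr : T -> Prop) c s :
  Pr c -> allP Pr s -> Pr (last c s).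
Proof. by elim: s c => //= x s IH c Hc [Hx Hs]; apply: IH. Qed.

Lemma allP_impl (T : Type) (Pr Pr' : T -> Prop) s :
  (forall x, Pr x -> Pr' x) -> allP Pr s -> allP Pr' s.
Proof. by move=> H; elim: s => //= x s IH [H1 H2]; split; auto. Qed.

Lemma serves_cat (S : eqType) k (s1 s2 : seq S) (c1 c2 : seq ('I_k -> S)) :
  serves s1 c1 -> serves s2 c2 -> serves (s1 ++ s2) (c1 ++ c2).
Proof.
elim: s1 c1 => [|x s IH] [|c cs] //= [H1 H2] H3; split => //; exact: IH.
Qed.

Lemma total_cost_cat (S : eqType) k beta (c0 : 'I_k -> S) s1 s2 :
  total_cost beta c0 (s1 ++ s2) =
  total_cost beta c0 s1 + total_cost beta (last c0 s1) s2.
Proof. by elim: s1 c0 => //= c s IH c0; rewrite IH addnA. Qed.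

Lemma move_cost_tri (S : eqType) k beta (a b c : 'I_k -> S) :
  move_cost beta a c <= move_cost beta a b + move_cost beta b c.
Proof.
rewrite /move_cost -big_split /=; apply: leq_sum => i _.
case: (a i =P c i) => [_|H]; first by [].
case: (a i =P b i) => [E|_]; last by rewrite leq_addr.
by rewrite E in H; case: (b i =P c i).
Qed.

Lemma total_cost_le (S : eqType) k beta (c0 c1 : 'I_k -> S) cs :
  total_cost beta c0 cs <= move_cost beta c0 c1 + total_cost beta c1 cs.
Proof.
case: cs => [|c cs] /=; first by [].
by rewrite addnA leq_add2r move_cost_tri.
Qed.

Lemma move_cost_self (S : eqType) k beta (c : 'I_k -> S) : move_cost beta c c = 0.
Proof. by rewrite /move_cost big1 // => i _; rewrite eqxx. Qed.

Lemma main (S : choiceType) k beta (Q : nat -> {fset S} -> seq {fset S}) :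
  valid_Q Q ->
  forall l (P : {fset S}) (conf : 'I_k -> S) sigma, l < k ->
  (#|` P|)%fset = nseqv l -> (exists i : 'I_k, l <= i /\ conf i \in P) ->
  can_gen Q beta l P sigma ->
  exists confs, [/\ serves sigma confs, total_cost beta conf confs <= cbound beta l &
     allP (fun d : 'I_k -> S => forall j : 'I_k, l <= j -> d j = conf j) confs].
Proof.
move=> HQ; elim=> [|l' IHl] P conf sigma Hlk HP [i [Hi HiP]] Hgen.
  case: Hgen => p [EP Es]; subst.
  exists [:: conf]; split => //=.
  - split => //; exists i; move: HiP; rewrite in_fset1 => /eqP.
    by [].
  - by rewrite move_cost_self.
have [_ _ H3 _ H5] := HQ l'.+1 P isT HP.
have [q qP Hq] := H5 _ HiP.
have Hl'k : l' < k by lia.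
pose i0 := Ordinal Hl'k.
pose c1 := fun j : 'I_k => if val j == l' then q else conf j.
have inner : forall (L : seq ({fset S} * seq S)) (c : 'I_k -> S),
    (forall x, x \in L -> x.1 \in Q l'.+1 P /\ can_gen Q beta l' x.1 x.2) ->
    (forall j : 'I_k, l' <= j -> c j = c1 j) ->
    exists confs, [/\ serves (flatten (map snd L)) confs,
      total_cost beta c confs <= size L * cbound beta l' &
      allP (fun d : 'I_k -> S => forall j : 'I_k, l' <= j -> d j = c1 j) confs].
  elim=> [|x L IH] c HL Hc.
    by exists [::].
  have [xQ xgen] := HL x (mem_head _ _).
  have [xsub xcard] := H3 _ xQ.
  have Hex : exists j : 'I_k, l' <= j /\ c j \in x.1.
    case/orP: (Hq _ xQ) => Hm.
    - exists i; split; first lia.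
      rewrite Hc; last lia.
      by rewrite /c1; have -> : (val i == l') = false by apply: gtn_eqF.
    - exists i0; split => //.
      by rewrite Hc // /c1 /= eqxx.
  have [cs1 [S1 T1 A1]] := IHl x.1 c x.2 Hl'k xcard Hex xgen.
  have Hlast : forall j : 'I_k, l' <= j -> last c cs1 j = c1 j.
    move=> j Hj.
    have := @allP_last _ (fun d : 'I_k -> S => forall j : 'I_k, l' <= j -> d j = c j)
      c cs1 (fun _ _ => erefl) A1.
    by move=> /(_ j Hj) ->; apply: Hc.
  have [cs2 [S2 T2 A2]] := IH (last c cs1)
    (fun y Hy => HL y (@mem_behead _ (x :: L) _ Hy)) Hlast.
  exists (cs1 ++ cs2); split.
  - by apply: serves_cat.
  - rewrite total_cost_cat /= mulSn; exact: leq_add.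
  - apply: allP_cat => //; apply: allP_impl A1 => d Hd j Hj.
    by rewrite Hd // Hc.
case: Hgen => L [HsL HL Hs]; subst sigma.
have [cs [S1 T1 A1]] := inner L c1 HL (fun _ _ => erefl).
exists cs; split => //.
- apply: leq_trans (total_cost_le _ _ c1 _) _ => /=.
  apply: leq_add; last by rewrite -HsL.
  rewrite /move_cost (bigD1 i0) //= big1 ?addn0.
    by case: ifP.
  move=> j Hj; rewrite /c1.
  have -> : (val j == l') = false.
    by apply/negbTE; apply: contra Hj => /eqP E; apply/eqP/val_inj.
  by rewrite eqxx.
- apply: allP_impl A1 => d Hd j Hj.
  rewrite Hd; last lia.
  by rewrite /c1; have -> : (val j == l') = false by apply: gtn_eqF.
Qed.

Theorem lemma6 (S : choiceType) (k beta l : nat)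
    (Q : nat -> {fset S} -> seq {fset S}) (P : {fset S}) (conf : 'I_k -> S) :
  1 <= k -> 1 <= beta -> l <= k - 1 ->
  valid_Q Q ->
  (#|` P|)%fset = nseqv l ->
  (exists i : 'I_k, l <= i /\ conf i \in P) ->
  forall sigma : seq S, can_gen Q beta l P sigma ->
  exists confs : seq ('I_k -> S),
    serves sigma confs /\ total_cost beta conf confs <= cbound beta l.
Proof.
move=> Hk Hb Hl HQ HP Hex sigma Hg.
have Hlk : l < k by lia.
have [cs [S1 T1 _]] := main HQ Hlk HP Hex Hg.
by exists cs.
Qed.
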